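(* Let $\pi:F^n\to F^d$ be a coordinate projection and let $X\subseteq F^n$ be a $\pi$-special submanifold of dimension $d$. Let $f:X\to F$ be a positive definable continuous function. Then the function $g:\pi(X)\to F$ defined by $g(t)=\inf\{f(x)\;|\;x\in X\cap\pi^{-1}(t)\}$ is a positive definable continuous function.
   Context: Throughout, $\mathcal F=(F,<,+,\cdot,0,1,\ldots)$ is a definably complete locally o-minimal expansion of an ordered field: locally o-minimal means that for every definable $X\subseteq F$ and every $a\in F$ there is an open interval $I\ni a$ such that $X\cap I$ is a finite union of points and open intervals; definably complete means every definable subset of $F$ has a supremum and an infimum in $F\cup\{\pm\infty\}$. ''Definable'' means definable with parameters. Dimension: for nonempty definable $X\subseteq F^n$, $\dim X$ is the largest $d$ such that $\pi(X)$ has nonempty interior for some coordinate projection $\pi:F^n\to F^d$. Special submanifolds: Let $X\subseteq F^n$ be definable of dimension $d$ and $\pi:F^n\to F^d$ a coordinate projection; after permuting coordinates assume $\pi$ is the projection onto the first $d$ coordinates. First suppose $X\subseteq F^d\times(0,1)^{n-d}$. A point $(a,b)\in F^d\times F^{n-d}$ is $(X,\pi)$-normal if there are definable open neighborhoods $A$ of $a$ in $F^d$ and $B$ of $b$ in $F^{n-d}$ such that either $(A\times B)\cap X=\emptyset$ or $(A\times B)\cap X$ is the graph of a definable continuous map $A\to B$. A point $a\in F^d$ is $(X,\pi)$-good if every point of $\{a\}\times F^{n-d}$ is $(X,\pi)$-normal. For general $X$, fix a definable homeomorphism (indeed $\mathcal C^\infty$ diffeomorphism) $\phi:F\to(0,1)$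 and call $a$ $(X,\pi)$-good if it is $(\psi(X),\pi)$-good, where $\psi=\mathrm{id}_{F^d}\times\phi^{n-d}$. $X$ is a $\pi$-special submanifold if every point of $\pi(X)$ is $(X,\pi)$-good. *)

(* Defs.v *)
From HB Require Import structures.
From mathcomp Require Import all_boot all_order all_algebra.
Set Implicit Arguments. Unset Strict Implicit. Unset Printing Implicit Defensive.
Import Order.TTheory GRing.Theory Num.Theory.
Local Open Scope ring_scope.

(* An expansion of the ordered field F is given by its family of definable
   (with parameters) sets D n of subsets of F^n: closed under boolean
   operations, under preimages and images of coordinate maps
   x |-> x \o s (these give cylinders, permutations, diagonals, projections),
   and containing the points, the order and the graphs of + and *. *)
Record expansion (F : realFieldType) := Expansion {
  D : forall n : nat, (('I_n -> F) -> Prop) -> Prop;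
  D_compl : forall n A, D A -> D (fun x : 'I_n -> F => ~ A x);
  D_union : forall n A B, D A -> D B -> D (fun x : 'I_n -> F => A x \/ B x);
  D_preim : forall m n (s : 'I_n -> 'I_m) (A : ('I_n -> F) -> Prop),
      D A -> D (fun y : 'I_m -> F => A (fun i => y (s i)));
  D_image : forall m n (s : 'I_n -> 'I_m) (A : ('I_m -> F) -> Prop),
      D A -> D (fun y : 'I_n -> F => exists x, A x /\ forall i, x (s i) = y i);
  D_point : forall c : F, D (fun x : 'I_1 -> F => x ord0 = c);
  D_lt : D (fun x : 'I_2 -> F => x (inord 0) < x (inord 1));
  D_add : D (fun x : 'I_3 -> F => x (inord 0) + x (inord 1) = x (inord 2));
  D_mul : D (fun x : 'I_3 -> F => x (inord 0) * x (inord 1) = x (inord 2))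
}.

Definition defI (F : realFieldType) (S : expansion F) (I : finType)
  (A : (I -> F) -> Prop) : Prop :=
  D S (fun x : 'I_#|I| -> F => A (fun i => x (enum_rank i))).

Definition is_lub (F : realFieldType) (A : F -> Prop) (s : F) :=
  (forall y, A y -> y <= s) /\ (forall s', (forall y, A y -> y <= s') -> s <= s').
Definition is_glb (F : realFieldType) (A : F -> Prop) (s : F) :=
  (forall y, A y -> s <= y) /\ (forall s', (forall y, A y -> s' <= y) -> s' <= s).

Definition definably_complete (F : realFieldType) (S : expansion F) : Prop :=
  forall A : F -> Prop, D S (fun x : 'I_1 -> F => A (x ord0)) ->
    (exists y, A y) ->
    ((exists b, forall y, A y -> y <= b) -> exists s, is_lub A s) /\
    ((exists b, forall y, A y -> b <= y) -> exists s, is_glb A s).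

Definition locally_o_minimal (F : realFieldType) (S : expansion F) : Prop :=
  forall A : F -> Prop, D S (fun x : 'I_1 -> F => A (x ord0)) ->
  forall a : F, exists l u : F, l < a < u /\
    exists (pts : seq F) (ivs : seq (F * F)),
      forall y, (A y /\ l < y < u) <->
        (y \in pts \/ has (fun p => (p.1 < y) && (y < p.2)) ivs).

Record DCLOM (F : realFieldType) := {
  dc_struct :> expansion F;
  dc_complete : definably_complete dc_struct;
  dc_lom : locally_o_minimal dc_struct
}.

Definition openI (F : realFieldType) (I : finType) (U : (I -> F) -> Prop) :=
  forall x, U x -> exists2 e : F, 0 < e &
    forall y, (forall i, `|y i - x i| < e) -> U y.

Definition nonempty_interior (F : realFieldType) (I : finType) (U : (I -> F) -> Prop) :=
  exists x, exists2 e : F, 0 < e & forall y, (forall i, `|y i - x i| < e) -> U y.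

Definition cont_on (F : realFieldType) (I J : finType) (A : (I -> F) -> Prop)
  (h : (I -> F) -> (J -> F)) :=
  forall x, A x -> forall e : F, 0 < e -> exists2 dl : F, 0 < dl &
    forall y, A y -> (forall i, `|y i - x i| < dl) -> forall j, `|h y j - h x j| < e.

Definition contF_on (F : realFieldType) (I : finType) (A : (I -> F) -> Prop)
  (f : (I -> F) -> F) :=
  forall x, A x -> forall e : F, 0 < e -> exists2 dl : F, 0 < dl &
    forall y, A y -> (forall i, `|y i - x i| < dl) -> `|f y - f x| < e.

Definition def_funF (F : realFieldType) (S : expansion F) (I : finType)
  (A : (I -> F) -> Prop) (f : (I -> F) -> F) :=
  defI S (fun z : (I + 'I_1)%type -> F =>
            A (fun i => z (inl i)) /\ z (inr ord0) = f (fun i => z (inl i))).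

Definition def_map (F : realFieldType) (S : expansion F) (I J : finType)
  (A : (I -> F) -> Prop) (h : (I -> F) -> (J -> F)) :=
  defI S (fun z : (I + J)%type -> F =>
            A (fun i => z (inl i)) /\ forall j, z (inr j) = h (fun i => z (inl i)) j).

(* coordinate projection F^n -> F^d : x |-> (x_{s 0}, ..., x_{s (d-1)}),
   s strictly increasing *)
Definition coord_proj (n d : nat) (s : 'I_d -> 'I_n) :=
  forall i j : 'I_d, (i < j)%N -> (s i < s j)%N.

Definition projset (F : realFieldType) (n d : nat) (s : 'I_d -> 'I_n)
  (X : ('I_n -> F) -> Prop) : ('I_d -> F) -> Prop :=
  fun t => exists x, X x /\ forall i, x (s i) = t i.

Definition definable (F : realFieldType) (S : expansion F) n (X : ('I_n -> F) -> Prop) :=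
  D S X.

Definition has_dim (F : realFieldType) (n : nat) (X : ('I_n -> F) -> Prop) (d : nat) :=
  (exists s : 'I_d -> 'I_n, coord_proj s /\ nonempty_interior (projset s X)) /\
  (forall (d' : nat) (s : 'I_d' -> 'I_n),
      coord_proj s -> nonempty_interior (projset s X) -> (d' <= d)%N).

(* complementary coordinates of s (the "last n - d" coordinates) *)
Definition Comp (n d : nat) (s : 'I_d -> 'I_n) : finType :=
  {i : 'I_n | i \notin codom s}.

Definition def_homeo01 (F : realFieldType) (S : expansion F) (phi : F -> F) :=
  def_funF S (fun _ : 'I_1 -> F => True) (fun x => phi (x ord0)) /\
  (forall t, 0 < phi t < 1) /\
  (forall y, 0 < y < 1 -> exists t, phi t = y) /\
  (forall t t', phi t = phi t' -> t = t') /\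
  (forall t (e : F), 0 < e -> exists2 dl : F, 0 < dl &
      forall t', `|t' - t| < dl -> `|phi t' - phi t| < e) /\
  (forall t (e : F), 0 < e -> exists2 dl : F, 0 < dl &
      forall t', `|phi t' - phi t| < dl -> `|t' - t| < e).

Definition psiset (F : realFieldType) (n d : nat) (s : 'I_d -> 'I_n) (phi : F -> F)
  (X : ('I_n -> F) -> Prop) : ('I_n -> F) -> Prop :=
  fun x => exists x', X x' /\ (forall i, x (s i) = x' (s i)) /\
    (forall j : Comp s, x (val j) = phi (x' (val j))).

Definition normal_pt (F : realFieldType) (S : expansion F) (n d : nat)
  (s : 'I_d -> 'I_n) (Y : ('I_n -> F) -> Prop) (a : 'I_d -> F) (b : Comp s -> F) :=
  exists (A : ('I_d -> F) -> Prop) (B : (Comp s -> F) -> Prop),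
    [/\ D S A, openI A & A a] /\ [/\ defI S B, openI B & B b] /\
    ((forall x, Y x -> ~ (A (fun i => x (s i)) /\ B (fun j => x (val j)))) \/
     exists h : ('I_d -> F) -> (Comp s -> F),
       [/\ forall a', A a' -> B (h a'),
           cont_on A h,
           def_map S A h &
           forall a' b', A a' -> B b' ->
             ((exists x, Y x /\ (forall i, x (s i) = a' i) /\
                                (forall j, x (val j) = b' j))
              <-> (forall j, b' j = h a' j))]).

Arguments normal_pt {F} S {n d} s Y a b.

Definition good_pt (F : realFieldType) (S : expansion F) (n d : nat)
  (s : 'I_d -> 'I_n) (phi : F -> F) (X : ('I_n -> F) -> Prop) (a : 'I_d -> F) :=
  forall b : Comp s -> F, normal_pt S s (psiset s phi X) a b.

Definition special_submanifold (F : realFieldType) (S : expansion F) (n d : nat)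
  (s : 'I_d -> 'I_n) (phi : F -> F) (X : ('I_n -> F) -> Prop) :=
  forall a, projset s X a -> good_pt S s phi X a.

(* Main.v *)
Require Import Defs.
From HB Require Import structures.
From mathcomp Require Import all_boot all_order all_algebra.
From Stdlib Require Import Classical FunctionalExtensionality PropExtensionality ClassicalEpsilon.
From mathcomp Require Import lra.
Import Order.TTheory GRing.Theory Num.Theory.
Local Open Scope ring_scope.
Set Implicit Arguments. Unset Strict Implicit.

Section Toolkit.
Variables (F : realFieldType) (S : expansion F).

Definition Def (I : finType) (P : (I -> F) -> Prop) := @defI F S I P.
Arguments Def {I}.

Lemma D_ext n (P Q : ('I_n -> F) -> Prop) : (forall x, P x <-> Q x) -> D S P -> D S Q.
Proof.
move=> H; have -> : Q = P; last by [].
by apply: functional_extensionality => x; apply: propositional_extensionality; split; apply H.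
Qed.

Lemma Def_ext (I : finType) (P Q : (I -> F) -> Prop) : (forall x, P x <-> Q x) -> Def P -> Def Q.
Proof.
move=> H; have -> : Q = P; last by [].
by apply: functional_extensionality => x; apply: propositional_extensionality; split; apply H.
Qed.

Lemma Def_preim (I J : finType) (sg : I -> J) (P : (I -> F) -> Prop) :
  Def P -> Def (fun y : J -> F => P (fun i => y (sg i))).
Proof.
move=> H; have := D_preim (fun k : 'I_#|I| => enum_rank (sg (enum_val k))) H.
apply: D_ext => y /=.
have -> : (fun i => y (enum_rank (sg (enum_val (enum_rank i))))) = (fun i => y (enum_rank (sg i))).
  by apply: functional_extensionality => i; rewrite enum_rankK.
by [].
Qed.

Lemma Def_not (I : finType) (P : (I -> F) -> Prop) : Def P -> Def (fun x => ~ P x).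
Proof. exact: D_compl. Qed.

Lemma Def_or (I : finType) (P Q : (I -> F) -> Prop) : Def P -> Def Q -> Def (fun x => P x \/ Q x).
Proof. exact: D_union. Qed.

Lemma Def_and (I : finType) (P Q : (I -> F) -> Prop) : Def P -> Def Q -> Def (fun x => P x /\ Q x).
Proof.
move=> hP hQ; apply: (@Def_ext _ (fun x => ~ (~ P x \/ ~ Q x))).
  move=> x; split; [move=> H; split; apply: NNPP => ?; apply: H; tauto | tauto].
by apply: Def_not; apply: Def_or; apply: Def_not.
Qed.

Lemma Def_imp (I : finType) (P Q : (I -> F) -> Prop) : Def P -> Def Q -> Def (fun x => P x -> Q x).
Proof.
move=> hP hQ; apply: (@Def_ext _ (fun x => ~ P x \/ Q x)).
  move=> x; split; [tauto|move=> H; case: (classic (P x)); tauto].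
by apply: Def_or => //; apply: Def_not.
Qed.

Definition join (I J : finType) (x : I -> F) (w : J -> F) : (I + J)%type -> F :=
  fun z => match z with inl i => x i | inr j => w j end.

Lemma Def_ex (I J : finType) (P : ((I + J)%type -> F) -> Prop) :
  Def P -> Def (fun x : I -> F => exists w : J -> F, P (join x w)).
Proof.
move=> H.
have := D_image (fun k : 'I_#|I| => enum_rank (inl (enum_val k) : (I + J)%type)) H.
apply: D_ext => y; split.
  case=> x [Px Hx]; exists (fun j => x (enum_rank (inr j : (I + J)%type))).
  suff <- : (fun z => x (enum_rank z)) = join (fun i => y (enum_rank i)) (fun j => x (enum_rank (inr j : (I + J)%type))) by [].
  apply: functional_extensionality => -[i|j] //=.
  by rewrite -Hx enum_rankK.
case=> w Pw; exists (fun k => join (fun i => y (enum_rank i)) w (enum_val k)); split.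
  suff -> : (fun z => join (fun i => y (enum_rank i)) w (enum_val (enum_rank z))) = join (fun i => y (enum_rank i)) w by [].
  by apply: functional_extensionality => z; rewrite enum_rankK.
by move=> k /=; rewrite enum_rankK /= enum_valK.
Qed.

Lemma Def_all (I J : finType) (P : ((I + J)%type -> F) -> Prop) :
  Def P -> Def (fun x : I -> F => forall w : J -> F, P (join x w)).
Proof.
move=> H; apply: (@Def_ext _ (fun x => ~ exists w, ~ P (join x w))).
  move=> x; split; [move=> H1 w; apply: NNPP => H2; apply: H1; by exists w|by move=> H1 [w]; apply].
by apply: Def_not; apply: (Def_ex (P := fun z => ~ P z)); apply: Def_not.
Qed.

Lemma Def_of_D n (P : ('I_n -> F) -> Prop) : D S P -> Def P.
Proof. move=> H; exact: (D_preim (fun i : 'I_n => enum_rank i) H). Qed.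

Lemma D_of_Def n (P : ('I_n -> F) -> Prop) : Def P -> D S P.
Proof.
move=> H; have := D_preim (fun k : 'I_#|'I_n| => enum_val k) H.
apply: D_ext => y /=.
suff -> : (fun i => y (enum_val (enum_rank i))) = y by [].
by apply: functional_extensionality => i; rewrite !enum_rankK.
Qed.

Lemma no_ord0 : 'I_0 -> False. Proof. by case. Qed.

Lemma Def_true (I : finType) : Def (fun _ : I -> F => True).
Proof.
have H0 := D_image (fun _ : 'I_0 => (ord0 : 'I_1)) (D_point S 0).
have H1 : D S (fun _ : 'I_0 -> F => True).
  apply: D_ext H0 => y; split => // _; exists (fun _ => 0); split => // i.
  by case: (no_ord0 i).
have := Def_preim (fun i : 'I_0 => False_rect I (no_ord0 i)) (Def_of_D H1).
by [].
Qed.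

Lemma Def_allfin (I J : finType) (P : J -> (I -> F) -> Prop) :
  (forall j, Def (P j)) -> Def (fun x => forall j, P j x).
Proof.
move=> H.
suff G : forall r : seq J, Def (fun x => forall j, j \in r -> P j x).
  by apply: Def_ext (G (enum J)) => x; split => Hx j; [apply: Hx; rewrite mem_enum|move=> _; apply: Hx].
elim=> [|j r IH].
  by apply: Def_ext (Def_true I) => x; split.
apply: Def_ext (Def_and (H j) IH) => x; split.
  by case=> H1 H2 k; rewrite in_cons => /orP [/eqP ->|]; [|apply: H2].
by move=> Hx; split; [apply: Hx; rewrite in_cons eqxx|move=> k Hk; apply: Hx; rewrite in_cons Hk orbT].
Qed.

Lemma Def_lt (I : finType) (i j : I) : Def (fun y : I -> F => y i < y j).
Proof.
have := Def_preim (fun k : 'I_2 => if val k == 0%N then i else j) (Def_of_D (D_lt S)).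
by apply: Def_ext => y /=; rewrite !inordK.
Qed.

Lemma Def_add (I : finType) (i j k : I) : Def (fun y : I -> F => y i + y j = y k).
Proof.
have := Def_preim (fun l : 'I_3 => if val l == 0%N then i else if val l == 1%N then j else k) (Def_of_D (D_add S)).
by apply: Def_ext => y /=; rewrite !inordK.
Qed.

Lemma Def_mul (I : finType) (i j k : I) : Def (fun y : I -> F => y i * y j = y k).
Proof.
have := Def_preim (fun l : 'I_3 => if val l == 0%N then i else if val l == 1%N then j else k) (Def_of_D (D_mul S)).
by apply: Def_ext => y /=; rewrite !inordK.
Qed.

Lemma Def_eqc (I : finType) (i : I) (c : F) : Def (fun y : I -> F => y i = c).
Proof.
have := Def_preim (fun l : 'I_1 => i) (Def_of_D (D_point S c)).
by [].
Qed.

Lemma Def_le (I : finType) (i j : I) : Def (fun y : I -> F => y i <= y j).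
Proof.
by apply: Def_ext (Def_not (Def_lt j i)) => y; rewrite leNgt; split => [/negP|/negP].
Qed.

Lemma Def_eq (I : finType) (i j : I) : Def (fun y : I -> F => y i = y j).
Proof.
apply: Def_ext (Def_and (Def_le i j) (Def_le j i)) => y; split.
  by case=> H1 H2; apply/eqP; rewrite eq_le H1 H2.
by move=> ->.
Qed.

Lemma Def_param (I J : finType) (P : ((I + J)%type -> F) -> Prop) (c : J -> F) :
  Def P -> Def (fun x : I -> F => P (join x c)).
Proof.
move=> H.
have H1 := Def_ex (Def_and H (Def_allfin (fun j => Def_eqc (inr j : (I + J)%type) (c j)))).
apply: Def_ext H1 => x; split.
  case=> w [Pw Hw]; suff <- : w = c by [].
  by apply: functional_extensionality.
by move=> Hx; exists c; split.
Qed.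


Definition sumf (I J : finType) (K : Type) (g : I -> K) (h : J -> K) : (I + J)%type -> K :=
  fun z => match z with inl i => g i | inr j => h j end.

Lemma Def_glb (I : finType) (A : (I -> F) -> F -> Prop) :
  Def (fun z : (I + 'I_1)%type -> F => A (fun i => z (inl i)) (z (inr ord0))) ->
  Def (fun z : (I + 'I_1)%type -> F => is_glb (A (fun i => z (inl i))) (z (inr ord0))).
Proof.
move=> H.
pose LB (z : (I + 'I_1)%type -> F) := forall y, A (fun i => z (inl i)) y -> z (inr ord0) <= y.
have HLB : Def LB.
  have H1 := Def_preim (sumf (fun i => inl (inl i)) (fun _ => inr ord0) : (I + 'I_1)%type -> ((I + 'I_1) + 'I_1)%type) H.
  have H2 := Def_imp H1 (Def_le (inl (inr ord0) : ((I + 'I_1) + 'I_1)%type) (inr ord0)).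
  apply: Def_ext (Def_all H2) => z; split => [h y|h w]; [exact: (h (fun _ => y))|exact: h].
have H3 := Def_preim (sumf (fun i => inl (inl i)) (fun _ => inr ord0) : (I + 'I_1)%type -> ((I + 'I_1) + 'I_1)%type) HLB.
have H4 := Def_all (Def_imp H3 (Def_le (inr ord0 : ((I + 'I_1) + 'I_1)%type) (inl (inr ord0)))).
apply: Def_ext (Def_and HLB H4) => z; split => -[h1 h2]; split => //.
  by move=> s' hs'; apply: (h2 (fun _ => s')).
by move=> w; apply: h2.
Qed.

End Toolkit.

Section Nest.
Variables (F : realFieldType) (S : expansion F) (dc : definably_complete S).

Lemma Def_ltc (I : finType) (c : F) (i : I) : Def S (fun y : I -> F => c < y i).
Proof.
have H := Def_ex (Def_and (Def_eqc S (inr ord0 : (I + 'I_1)%type) c) (Def_lt S (inr ord0) (inl i))).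
apply: Def_ext H => y; split => [[w [-> h]] //|h]; by exists (fun _ => c).
Qed.

Lemma Def_gtc (I : finType) (c : F) (i : I) : Def S (fun y : I -> F => y i < c).
Proof.
have H := Def_ex (Def_and (Def_eqc S (inr ord0 : (I + 'I_1)%type) c) (Def_lt S (inl i) (inr ord0))).
apply: Def_ext H => y; split => [[w [-> h]] //|h]; by exists (fun _ => c).
Qed.

Lemma Def_lec (I : finType) (c : F) (i : I) : Def S (fun y : I -> F => y i <= c).
Proof.
by apply: Def_ext (Def_not (Def_ltc c i)) => y; rewrite leNgt; split => [/negP|/negP].
Qed.

Lemma Def_gec (I : finType) (c : F) (i : I) : Def S (fun y : I -> F => c <= y i).
Proof.
by apply: Def_ext (Def_not (Def_gtc c i)) => y; rewrite leNgt; split => [/negP|/negP].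
Qed.

Lemma exists_glb (A : F -> Prop) : Def S (fun y : 'I_1 -> F => A (y ord0)) ->
  (exists y, A y) -> (exists b, forall y, A y -> b <= y) -> exists s, is_glb A s.
Proof. move=> H ne bd; exact: (proj2 (dc (D_of_Def H) ne) bd). Qed.

Lemma nest1 (L : F -> F -> Prop) (M : F) :
  Def S (fun z : ('I_1 + 'I_1)%type -> F => L (z (inr ord0)) (z (inl ord0))) ->
  (forall d, 0 < d -> exists c, L d c) ->
  (forall d d' c, 0 < d -> d <= d' -> L d c -> L d' c) ->
  (forall d c, 0 < d -> d <= 1 -> L d c -> `|c| <= M) ->
  exists cs, forall d e, 0 < d -> 0 < e -> exists c, L d c /\ `|c - cs| < e.
Proof.
move=> HL ne mono bd.
have HLd : forall d, Def S (fun y : 'I_1 -> F => L d (y ord0)).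
  by move=> d; have := Def_param (fun _ : 'I_1 => d) HL.
have glbex : forall d, 0 < d -> d <= 1 -> exists k, is_glb (L d) k.
  move=> d d0 d1; apply: exists_glb => //; first exact: ne.
  exists (- M) => c hc; have := bd d c d0 d1 hc; rewrite ler_norml; case/andP => //.
pose Kset k := exists d, [/\ 0 < d, d <= 1 & is_glb (L d) k].
have HK : Def S (fun y : 'I_1 -> F => Kset (y ord0)).
  have H1 := Def_glb (A := fun x : 'I_1 -> F => L (x ord0))
     (Def_preim (sumf (fun _ => inr ord0) (fun _ => inl ord0) : ('I_1 + 'I_1)%type -> ('I_1 + 'I_1)%type) HL).
  have H2 := Def_preim (sumf (fun _ => inr ord0) (fun _ => inl ord0) : ('I_1 + 'I_1)%type -> ('I_1 + 'I_1)%type) H1.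
  have H3 := Def_ex (Def_and (Def_and (Def_ltc 0 (inr ord0 : ('I_1 + 'I_1)%type)) (Def_lec 1 (inr ord0 : ('I_1+'I_1)%type))) H2).
  apply: Def_ext H3 => y; split.
    by case=> w [[h1 h2] h3]; exists (w ord0).
  by case=> d [h1 h2 h3]; exists (fun _ => d).
have [k1 hk1] := glbex 1 ltr01 (lexx 1).
have Kne : exists k, Kset k by exists k1, 1; split => //; exact: ltr01.
have Kbd : exists b, forall k, Kset k -> k <= b.
  exists M => k [d [d0 d1 [hlb hgr]]].
  have [c hc] := ne d d0.
  have := hlb c hc; have := bd d c d0 d1 hc; rewrite ler_norml => /andP [_ h] h'.
  exact: le_trans h' h.
have [cs [hub hlub]] := proj1 (dc (D_of_Def HK) Kne) Kbd.
exists cs => d e d0 e0.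
have [k [[d1 [d10 d11 hk]] hgt]] : exists k, Kset k /\ cs - e/2 < k.
  apply: NNPP => hn.
  have : cs <= cs - e / 2.
    apply: hlub => k hk; rewrite leNgt; apply/negP => hlt; apply: hn; by exists k.
  lra.
pose d2 := Num.min d d1.
have d20 : 0 < d2 by rewrite lt_min d0 d10.
have d21 : d2 <= d1 by rewrite ge_min lexx orbT.
have d2d : d2 <= d by rewrite ge_min lexx.
have [k2 hk2] := glbex d2 d20 (le_trans d21 d11).
have k12 : k <= k2.
  apply: (proj2 hk2) => c hc; apply: (proj1 hk); exact: mono d2 d1 c d20 d21 hc.
have k2cs : k2 <= cs.
  apply: hub; exists d2; split => //; exact: le_trans d21 d11.
have [c [hc hclt]] : exists c, L d2 c /\ c < k2 + e/2.
  apply: NNPP => hn.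
  have : k2 + e/2 <= k2.
    apply: (proj2 hk2) => c hc; rewrite leNgt; apply/negP => h; apply: hn; by exists c.
  lra.
exists c; split; first exact: mono d2 d c d20 d2d hc.
have := proj1 hk2 c hc; rewrite ltr_distl => h; apply/andP; split; lra.
Qed.


Lemma Def_absdiff (I : finType) (i j k : I) : Def S (fun y : I -> F => `|y i - y j| < y k).
Proof.
pose J := (I + 'I_1)%type.
have A1 : forall (a b c : I), Def S (fun y : I -> F => y a < y b + y c).
  move=> a b c.
  have H := Def_ex (Def_and (Def_add S (inl b : J) (inl c) (inr ord0)) (Def_lt S (inl a : J) (inr ord0))).
  apply: Def_ext H => y; split => [[w [<- h]] //|h]; by exists (fun _ => y b + y c).
apply: Def_ext (Def_and (A1 i j k) (A1 j i k)) => y.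
by rewrite ltr_distl; split => [[h1 h2]|/andP [h1 h2]]; [apply/andP; split; lra|split; lra].
Qed.

Lemma nest_ord (m : nat) (K : F -> ('I_m -> F) -> Prop) (M : F) :
  Def S (fun z : ('I_m + 'I_1)%type -> F => K (z (inr ord0)) (fun i => z (inl i))) ->
  (forall d, 0 < d -> exists x, K d x) ->
  (forall d d' x, 0 < d -> d <= d' -> K d x -> K d' x) ->
  (forall d x, 0 < d -> d <= 1 -> K d x -> forall i, `|x i| <= M) ->
  exists p, forall d e, 0 < d -> 0 < e -> exists x, K d x /\ forall i, `|x i - p i| < e.
Proof.
elim: m K => [|m IH] K HK ne mono bd.
  exists (fun _ => 0) => d e d0 e0; have [x hx] := ne d d0; exists x; split => // i.
  by case: (no_ord0 i).
pose K' d (y : 'I_m -> F) := exists x, K d x /\ forall k : 'I_m, x (lift ord_max k) = y k.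
have HK' : Def S (fun z : ('I_m + 'I_1)%type -> F => K' (z (inr ord0)) (fun i => z (inl i))).
  pose J := (('I_m + 'I_1) + 'I_m.+1)%type.
  have H1 := Def_preim (sumf (fun i => inr i) (fun _ => inl (inr ord0)) : ('I_m.+1 + 'I_1)%type -> J) HK.
  have H2 := Def_allfin (fun k : 'I_m => Def_eq S (inr (lift ord_max k) : J) (inl (inl k))).
  apply: Def_ext (Def_ex (Def_and H1 H2)) => z; split.
    by case=> w [h1 h2]; exists w.
  by case=> w [h1 h2]; exists w.
have ne' : forall d, 0 < d -> exists y, K' d y.
  move=> d d0; have [x hx] := ne d d0; by exists (fun k => x (lift ord_max k)), x.
have mono' : forall d d' y, 0 < d -> d <= d' -> K' d y -> K' d' y.
  move=> d d' y d0 dd [x [hx hy]]; exists x; split => //; exact: mono hx.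
have bd' : forall d y, 0 < d -> d <= 1 -> K' d y -> forall i, `|y i| <= M.
  move=> d y d0 d1 [x [hx hy]] i; rewrite -hy; exact: bd hx _.
have [p' hp'] := IH K' HK' ne' mono' bd'.
pose L d c := exists x, [/\ K d x, (forall k : 'I_m, `|x (lift ord_max k) - p' k| < d) & x ord_max = c].
have HL : Def S (fun z : ('I_1 + 'I_1)%type -> F => L (z (inr ord0)) (z (inl ord0))).
  pose J := ((('I_1 + 'I_1) + 'I_m.+1) + 'I_m)%type.
  have H1 := Def_preim (sumf (fun i => inl (inr i)) (fun _ => inl (inl (inr ord0))) : ('I_m.+1 + 'I_1)%type -> J) HK.
  have H2 := Def_allfin (fun k : 'I_m => Def_absdiff (inl (inr (lift ord_max k)) : J) (inr k) (inl (inl (inr ord0)))).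
  have H3 := Def_eq S (inl (inr ord_max) : J) (inl (inl (inl ord0))).
  have H4 := Def_ex (Def_param p' (Def_and H1 (Def_and H2 H3))).
  apply: Def_ext H4 => z; split.
    by case=> w [h1 [h2 h3]]; exists w; split.
  by case=> w [h1 h2 h3]; exists w; split.
have neL : forall d, 0 < d -> exists c, L d c.
  move=> d d0; have [y [[x [hx hxy]] hy]] := hp' d d d0 d0.
  by exists (x ord_max), x; split => // k; rewrite hxy.
have monoL : forall d d' c, 0 < d -> d <= d' -> L d c -> L d' c.
  move=> d d' c d0 dd [x [hx hk hc]]; exists x; split => //; first exact: mono hx.
  by move=> k; apply: lt_le_trans (hk k) dd.
have bdL : forall d c, 0 < d -> d <= 1 -> L d c -> `|c| <= M.
  by move=> d c d0 d1 [x [hx _ <-]]; exact: bd hx _.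
have [cs hcs] := nest1 HL neL monoL bdL.
exists (fun i => if unlift ord_max i is Some k then p' k else cs) => d e d0 e0.
pose d' := Num.min d e.
have d'0 : 0 < d' by rewrite lt_min d0 e0.
have d'e : d' <= e by rewrite ge_min lexx orbT.
have d'd : d' <= d by rewrite ge_min lexx.
have [c [[x [hx hk hc]] hcc]] := hcs d' e d'0 e0.
exists x; split; first exact: mono hx.
move=> i; case: unliftP => [k ->|->]; last by rewrite hc.
exact: lt_le_trans (hk k) d'e.
Qed.

Lemma nest (I : finType) (K : F -> (I -> F) -> Prop) (M : F) :
  Def S (fun z : (I + 'I_1)%type -> F => K (z (inr ord0)) (fun i => z (inl i))) ->
  (forall d, 0 < d -> exists x, K d x) ->
  (forall d d' x, 0 < d -> d <= d' -> K d x -> K d' x) ->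
  (forall d x, 0 < d -> d <= 1 -> K d x -> forall i, `|x i| <= M) ->
  exists p, forall d e, 0 < d -> 0 < e -> exists x, K d x /\ forall i, `|x i - p i| < e.
Proof.
move=> HK ne mono bd.
pose K'' d (y : 'I_#|I| -> F) := K d (fun i => y (enum_rank i)).
have HK'' := Def_preim (sumf (fun i => inl (enum_rank i)) (fun _ => inr ord0) : (I + 'I_1)%type -> ('I_#|I| + 'I_1)%type) HK.
have eqK : forall d x, K'' d (fun k => x (enum_val k)) = K d x.
  move=> d x; rewrite /K''; congr (K d _); apply: functional_extensionality => i.
  by rewrite enum_rankK.
have [p hp] := @nest_ord #|I| K'' M HK''
  (fun d d0 => let: ex_intro x hx := ne d d0 in ex_intro _ (fun k => x (enum_val k)) (eq_ind_r id hx (eqK d x)))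
  (fun d d' y d0 dd hy => mono d d' _ d0 dd hy)
  (fun d y d0 d1 hy k => eq_ind _ (fun v => `|v| <= M) (bd d _ d0 d1 hy (enum_val k)) _ (congr1 y (enum_valK k))).
exists (fun i => p (enum_rank i)) => d e d0 e0.
have [y [hy hye]] := hp d e d0 e0.
by exists (fun i => y (enum_rank i)); split.
Qed.

End Nest.

Section Helpers.
Variable F : realFieldType.

Lemma min2 (a b : F) : 0 < a -> 0 < b -> exists2 m : F, 0 < m & m <= a /\ m <= b.
Proof.
move=> a0 b0; exists (Num.min a b); first by rewrite lt_min a0 b0.
by split; rewrite ge_min lexx ?orbT.
Qed.

Lemma fin_min (J : finType) (P : J -> F -> Prop) :
  (forall j, exists2 r, 0 < r & P j r) ->
  (forall j r r', 0 < r' -> r' <= r -> P j r -> P j r') ->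
  exists2 r, 0 < r & forall j, P j r.
Proof.
move=> H mono.
suff G : forall l : seq J, exists2 r, 0 < r & forall j, j \in l -> P j r.
  by have [r r0 hr] := G (enum J); exists r => // j; apply: hr; rewrite mem_enum.
elim=> [|j l [r r0 hr]]; first by exists 1 => //; exact: ltr01.
have [rj rj0 hrj] := H j.
have [m m0 [m1 m2]] := min2 r0 rj0.
exists m => // k; rewrite in_cons => /orP [/eqP ->|hk].
  exact: mono hrj.
exact: mono (hr k hk).
Qed.

Lemma fin_bound (J : finType) (g : J -> F) : exists M : F, 0 <= M /\ forall j, `|g j| <= M.
Proof.
exists (\sum_j `|g j|); split; first by apply: sumr_ge0.
move=> j; rewrite (bigD1 j) //= lerDl; apply: sumr_ge0 => i _; exact: normr_ge0.
Qed.

Lemma eq_close (a b : F) : (forall e, 0 < e -> `|a - b| < e) -> a = b.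
Proof.
move=> H; apply/eqP; rewrite -subr_eq0 -normr_eq0; apply/eqP; apply: NNPP => hn.
have h0 : 0 < `|a - b| by rewrite lt_def normr_ge0 andbT; apply/eqP.
by have := H _ h0; rewrite ltxx.
Qed.

Lemma le_close (a c : F) : (forall e, 0 < e -> a <= c + e) -> a <= c.
Proof.
move=> H; rewrite leNgt; apply/negP => hlt.
have h0 : 0 < (a - c) / 2 by rewrite divr_gt0 // subr_gt0.
have := H _ h0; lra.
Qed.

Lemma near_glb (A : F -> Prop) k e : is_glb A k -> 0 < e -> exists y, A y /\ y < k + e.
Proof.
move=> [hl hg] e0; apply: NNPP => hn.
have : k + e <= k.
  apply: hg => y hy; rewrite leNgt; apply/negP => h; apply: hn; by exists y.
lra.
Qed.

Lemma glb_uniq (A : F -> Prop) a b : is_glb A a -> is_glb A b -> a = b.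
Proof.
move=> [ha1 ha2] [hb1 hb2]; apply/eqP; rewrite eq_le; apply/andP; split.
  exact: hb2. exact: ha2.
Qed.

End Helpers.

Section Main.
Variables (F : realFieldType) (S : DCLOM F) (n d : nat) (s : 'I_d -> 'I_n) (phi : F -> F)
  (X : ('I_n -> F) -> Prop) (f : ('I_n -> F) -> F).
Hypotheses (hphi : def_homeo01 S phi) (hX : definable S X) (hf : def_funF S X f).

Definition V (t : 'I_d -> F) := (fun y => exists x, [/\ X x, (forall i, x (s i) = t i) & y = f x]).

Lemma DV : Def S (fun z : ('I_d + 'I_1)%type -> F => V (fun i => z (inl i)) (z (inr ord0))).
Proof.
pose J := (('I_d + 'I_1) + 'I_n)%type.
have H1 := Def_preim (sumf (fun i => inr i) (fun _ => inl (inr ord0)) : ('I_n + 'I_1)%type -> J) (hf : Def S _).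
have H2 := Def_allfin (fun i : 'I_d => Def_eq S (inr (s i) : J) (inl (inl i))).
apply: Def_ext (Def_ex (Def_and H1 H2)) => z; split.
  by case=> w [[h1 h2] h3]; exists w; split.
by case=> w [h1 h2 h3]; exists w; split.
Qed.

Lemma Dproj : Def S (fun t : 'I_d -> F => projset s X t).
Proof.
pose J := ('I_d + 'I_n)%type.
have H1 := Def_preim (fun i => inr i : J) (Def_of_D (hX : D S X)).
have H2 := Def_allfin (fun i : 'I_d => Def_eq S (inr (s i) : J) (inl i)).
apply: Def_ext (Def_ex (Def_and H1 H2)) => z; split.
  by case=> w [h1 h2]; exists w; split.
by case=> w [h1 h2]; exists w; split.
Qed.


Lemma Dgraph (g : ('I_d -> F) -> F) :
  (forall t, projset s X t -> is_glb (V t) (g t)) -> def_funF S (projset s X) g.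
Proof.
move=> hg.
have H := Def_and (Def_preim (fun i => inl i : ('I_d + 'I_1)%type) Dproj) (Def_glb (A := V) DV).
rewrite /def_funF; apply: (Def_ext _ H) => z; split.
  by case=> h1 h2; split => //; apply: glb_uniq h2 (hg _ h1).
by case=> h1 ->; split => //; apply: hg.
Qed.

Definition Kf (t : 'I_d -> F) (c : F) (dl : F) (p : ('I_d + Comp s)%type -> F) :=
  (forall i, `|p (inl i) - t i| < dl) /\
  exists x, [/\ X x, (forall i, x (s i) = p (inl i)), (forall j, p (inr j) = phi (x (val j))) & f x <= c + dl].

Lemma Def_leadd (I : finType) (a b c : I) : Def S (fun y : I -> F => y a <= y b + y c).
Proof.
pose J := (I + 'I_1)%type.
have H := Def_ex (Def_and (Def_add S (inl b : J) (inl c) (inr ord0)) (Def_le S (inl a : J) (inr ord0))).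
apply: Def_ext H => y; split => [[w [<- h]] //|h]; by exists (fun _ => y b + y c).
Qed.

Lemma DK (t : 'I_d -> F) (c : F) :
  Def S (fun z : (('I_d + Comp s) + 'I_1)%type -> F => Kf t c (z (inr ord0)) (fun i => z (inl i))).
Proof.
pose J0 := ((('I_d + Comp s) + 'I_1) + ('I_d + 'I_1))%type.
pose J1 := (J0 + 'I_n)%type.
pose J2 := (J1 + 'I_1)%type.
have P1 := Def_allfin (fun i : 'I_d => Def_absdiff S (inl (inl (inl i)) : J0) (inr (inl i)) (inl (inr ord0))).
have Ha := Def_preim (sumf (fun i => inl (inr i)) (fun _ => inr ord0) : ('I_n + 'I_1)%type -> J2) (hf : Def S _).
have Hb := Def_leadd (inr ord0 : J2) (inl (inl (inr (inr ord0)))) (inl (inl (inl (inr ord0)))).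
have Hd : Def S (fun y : J1 -> F => X (fun i => y (inr i)) /\ f (fun i => y (inr i)) <= y (inl (inr (inr ord0))) + y (inl (inl (inr ord0)))).
  apply: Def_ext (Def_ex (Def_and Ha Hb)) => y; split.
    by case=> w [[h1 h2] h3]; split => //; rewrite -h2.
  by case=> h1 h2; exists (fun _ => f (fun i => y (inr i))); split.
have Hc1 := Def_allfin (fun i : 'I_d => Def_eq S (inr (s i) : J1) (inl (inl (inl (inl i))))).
have Hc2 := Def_allfin (fun j : Comp s => Def_preim (sumf (fun _ => inr (val j)) (fun _ => inl (inl (inl (inr j)))) : ('I_1 + 'I_1)%type -> J1) ((proj1 hphi) : Def S _)).
have P2 := Def_ex (Def_and Hd (Def_and Hc1 Hc2)).
have H := Def_param (sumf t (fun _ => c)) (Def_and P1 P2).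
apply: Def_ext H => z; split.
  case=> h1 [w [[h2 h3] [h4 h5]]]; split => //; exists w; split => //.
  by move=> j; case: (h5 j).
case=> h1 [w [h2 h3 h4 h5]]; split => //; exists w; split => //; split => // j; split => //; exact: h4.
Qed.


Hypotheses (hsp : special_submanifold S s phi X) (hpos : forall x, X x -> 0 < f x)
  (hfc : contF_on X f).

Definition psi (x : 'I_n -> F) : 'I_n -> F := fun i => if i \in codom s then x i else phi (x i).

Lemma psi_pt x : X x -> [/\ psiset s phi X (psi x), (forall i, psi x (s i) = x (s i)) &
  (forall j : Comp s, psi x (val j) = phi (x (val j)))].
Proof.
move=> hx.
have h1 : forall i, psi x (s i) = x (s i) by move=> i; rewrite /psi codom_f.
have h2 : forall j : Comp s, psi x (val j) = phi (x (val j)).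
  by move=> j; rewrite /psi (negbTE (valP j)).
by split => //; exists x; split.
Qed.

Lemma close (xs : 'I_n -> F) (dl : F) : 0 < dl ->
  exists2 eta, 0 < eta & forall x, (forall k, `|x (s k) - xs (s k)| < eta) ->
    (forall j : Comp s, `|phi (x (val j)) - phi (xs (val j))| < eta) -> forall i, `|x i - xs i| < dl.
Proof.
move=> dl0.
case: hphi => _ [_ [_ [_ [_ hinv]]]].
have [r r0 hr] := @fin_min F (Comp s) (fun j r => forall t', `|phi t' - phi (xs (val j))| < r -> `|t' - xs (val j)| < dl)
  (fun j => hinv (xs (val j)) dl dl0)
  (fun j r r' _ hle hP t' ht' => hP t' (lt_le_trans ht' hle)).
have [eta eta0 [e1 e2]] := min2 r0 dl0.
exists eta => // x hk hj i.
case: (boolP (i \in codom s)) => hi.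
  by move/codomP: hi => [k ->]; apply: lt_le_trans (hk k) e2.
have := hr (exist _ i hi) (x i); apply.
exact: lt_le_trans (hj (exist _ i hi)) e1.
Qed.


Lemma key t c : projset s X t ->
  (forall dl, 0 < dl -> exists x, [/\ X x, (forall i, `|x (s i) - t i| < dl) & f x <= c + dl]) ->
  exists x, [/\ X x, (forall i, x (s i) = t i) & f x <= c].
Proof.
move=> ht hyp.
have hrange : forall u, 0 < phi u < 1 by case: hphi => _ [].
have [M [M0 hM]] := fin_bound t.
have ne : forall dl, 0 < dl -> exists p, Kf t c dl p.
  move=> dl dl0; have [x [hx h1 h2]] := hyp dl dl0.
  exists (sumf (fun i => x (s i)) (fun j => phi (x (val j)))); split => //.
  by exists x; split.
have mono : forall dl dl' p, 0 < dl -> dl <= dl' -> Kf t c dl p -> Kf t c dl' p.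
  move=> dl dl' p _ hd [h1 [x [h2 h3 h4 h5]]]; split.
    by move=> i; apply: lt_le_trans (h1 i) hd.
  by exists x; split => //; apply: le_trans h5 _; rewrite lerD2l.
have bd : forall dl p, 0 < dl -> dl <= 1 -> Kf t c dl p -> forall i, `|p i| <= M + 1.
  move=> dl p _ d1 [h1 [x [h2 h3 h4 h5]]] [i|j].
    have := h1 i; have := hM i; move: (p (inl i)) (t i) => a b.
    rewrite ltr_distl !ler_norml => /andP [hb1 hb2] /andP [ha1 ha2].
    apply/andP; split; lra.
  rewrite h4; have /andP [hp0 hp1] := hrange (x (val j)).
  rewrite ger0_norm ?ltW //; lra.
have [p hp] := nest (@dc_complete _ S) (DK t c) ne mono bd.
have pt_eq : (fun i => p (inl i)) = t.
  apply: functional_extensionality => i; apply: eq_close => e e0.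
  have e2 : 0 < e / 2 by rewrite divr_gt0.
  have [q [[hq1 _] hq2]] := hp _ _ e2 e2.
  have := hq1 i; have := hq2 (inl i); rewrite !ltr_distl => /andP [? ?] /andP [? ?].
  apply/andP; split; lra.
have [A [B [[DA oA Aa] [[DB oB Bb] hc]]]] := hsp ht (fun j => p (inr j)).
have [rA rA0 hrA] := oA t Aa.
have [rB rB0 hrB] := oB _ Bb.
case: hc => [hemp | [h [hAB hcont hdef hiff]]].
  have [dl dl0 [dlA dl1]] := min2 rA0 ltr01.
  have [q [[hq1 [x [hx hx1 hx2 _]]] hq2]] := hp dl rB dl0 rB0.
  have [hpsi hps1 hps2] := psi_pt hx.
  exfalso; apply: (hemp _ hpsi); split.
    apply: hrA => i /=; rewrite hps1 hx1; exact: lt_le_trans (hq1 i) dlA.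
  by apply: hrB => j /=; rewrite hps2 -hx2; exact: hq2 (inr j).
have Bht := hAB t Aa.
have [y [hy [hy1 hy2]]] := (proj2 (hiff t (h t) Aa Bht)) (fun j => erefl).
case: hy => [xs [hxs [hxs1 hxs2]]].
exists xs; split => //.
  by move=> i; rewrite -hxs1 hy1.
apply: le_close => eta eta0.
have eta2 : 0 < eta / 2 by rewrite divr_gt0.
have [dlf dlf0 hdlf] := hfc hxs eta2.
have [eta1 eta10 hcl] := close xs dlf0.
have [dlh dlh0 hdlh] := hcont t Aa eta1 eta10.
have [m1 m10 [m1a m1b]] := min2 rA0 dlh0.
have [m2 m20 [m2a m2b]] := min2 eta10 eta2.
have [dl dl0 [dl1 dl2]] := min2 m10 m20.
have [q [[hq1 [x [hx hx1 hx2 hx3]]] hq2]] := hp dl rB dl0 rB0.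
have hq1' : forall i, `|q (inl i) - t i| < dl by [].
have Aq : A (fun i => q (inl i)).
  apply: hrA => i; apply: lt_le_trans (hq1 i) _; apply: le_trans dl1 m1a.
have Bq : B (fun j => q (inr j)) by apply: hrB => j; exact: hq2 (inr j).
have [hpsi hps1 hps2] := psi_pt hx.
have hqh : forall j, q (inr j) = h (fun i => q (inl i)) j.
  apply: (proj1 (hiff _ _ Aq Bq)); exists (psi x); split => //; split => i /=.
    by rewrite hps1 hx1.
  by rewrite hps2 hx2.
have hclose : forall i, `|x i - xs i| < dlf.
  apply: hcl => [k|j].
    rewrite hx1 -hxs1 hy1; apply: lt_le_trans (hq1 k) _; apply: le_trans dl2 m2a.
  rewrite -hx2 hqh -hxs2 hy2; apply: hdlh => // i.
  apply: lt_le_trans (hq1 i) _; apply: le_trans dl1 m1b.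
have := hdlf x hx hclose.
rewrite ltr_distl => /andP [hh1 hh2].
have : dl <= eta / 2 by apply: le_trans dl2 m2b.
lra.
Qed.


Lemma main_res : exists g : ('I_d -> F) -> F,
    [/\ forall t, projset s X t ->
          is_glb (fun y => exists x, [/\ X x, (forall i, x (s i) = t i) & y = f x]) (g t),
        forall t, projset s X t -> 0 < g t,
        def_funF S (projset s X) g &
        contF_on (projset s X) g].
Proof.
pose g t := epsilon (inhabits (0 : F)) (is_glb (V t)).
have glbex : forall t, projset s X t -> exists k, is_glb (V t) k.
  move=> t ht; apply: (exists_glb (@dc_complete _ S)).
  - exact: (Def_param t (Def_preim (sumf (fun i => inr i) (fun _ => inl ord0) : ('I_d + 'I_1)%type -> ('I_1 + 'I_d)%type) DV)).
  - by case: ht => x [hx hx1]; exists (f x), x; split.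
  - by exists 0 => y [x [hx _ ->]]; apply: ltW; apply: hpos.
have hg : forall t, projset s X t -> is_glb (V t) (g t).
  by move=> t ht; apply: epsilon_spec; apply: glbex.
exists g; split => //.
- move=> t ht; rewrite ltNge; apply/negP => hle.
  have hyp : forall dl, 0 < dl -> exists x, [/\ X x, (forall i, `|x (s i) - t i| < dl) & f x <= 0 + dl].
    move=> dl dl0; have [y [[x [hx hx1 ->]] hy]] := near_glb (hg t ht) dl0.
    exists x; split => //; first by move=> i; rewrite hx1 subrr normr0.
    apply: ltW; apply: lt_le_trans hy _; by rewrite lerD2r.
  have [xs [hxs _ hxs2]] := key ht hyp.
  by have := hpos hxs; rewrite ltNge hxs2.
- exact: Dgraph.
move=> t ht e e0.
have e2 : 0 < e / 2 by rewrite divr_gt0.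
have [dlL dlL0 hL] : exists2 dlL, 0 < dlL & forall t', projset s X t' ->
    (forall i, `|t' i - t i| < dlL) -> g t - e < g t'.
  apply: NNPP => hn.
  have hyp : forall dl, 0 < dl -> exists x, [/\ X x, (forall i, `|x (s i) - t i| < dl) & f x <= (g t - e) + dl].
    move=> dl dl0.
    have [t' [ht' ht'd hgt']] : exists t', [/\ projset s X t', (forall i, `|t' i - t i| < dl) & g t' <= g t - e].
      apply: NNPP => hn2; apply: hn; exists dl => // t' h1 h2; rewrite ltNge; apply/negP => h3.
      by apply: hn2; exists t'.
    have [y [[x [hx hx1 ->]] hy]] := near_glb (hg t' ht') dl0.
    exists x; split => //; first by move=> i; rewrite hx1.
    apply: ltW; apply: lt_le_trans hy _; by rewrite lerD2r.
  have [xs [hxs hxs1 hxs2]] := key ht hyp.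
  have := proj1 (hg t ht) (f xs) (ex_intro _ xs (And3 hxs hxs1 erefl)).
  lra.
have [y0 [[x0 [hx0 hx01 ->]] hy0]] := near_glb (hg t ht) e2.
have [hpsi0 hps01 hps02] := psi_pt hx0.
have [A [B [[DA oA Aa] [[DB oB Bb] hc]]]] := hsp ht (fun j => phi (x0 (val j))).
have [rA rA0 hrA] := oA t Aa.
have heq1 : (fun i => psi x0 (s i)) = t.
  by apply: functional_extensionality => i; rewrite hps01 hx01.
have heq2 : (fun j : Comp s => psi x0 (val j)) = (fun j : Comp s => phi (x0 (val j))).
  by apply: functional_extensionality => j; rewrite hps02.
case: hc => [hemp | [h [hAB hcont hdef hiff]]].
  by exfalso; apply: (hemp _ hpsi0); rewrite heq1 heq2.
have hht : forall j, phi (x0 (val j)) = h t j.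
  apply: (proj1 (hiff t _ Aa Bb)); exists (psi x0); split => //; split => i /=.
    by rewrite hps01 hx01.
  by rewrite hps02.
have [dlf dlf0 hdlf] := hfc hx0 e2.
have [eta1 eta10 hcl] := close x0 dlf0.
have [dlh dlh0 hdlh] := hcont t Aa eta1 eta10.
have [m1 m10 [m1a m1b]] := min2 rA0 dlh0.
have [m2 m20 [m2a m2b]] := min2 m10 eta10.
have [dl dl0 [dl1 dl2]] := min2 m20 dlL0.
exists dl => // t' ht' hdt'.
have At' : A t'.
  apply: hrA => i; apply: lt_le_trans (hdt' i) _; apply: le_trans dl1 (le_trans m2a m1a).
have [y' [hy' [hy'1 hy'2]]] := proj2 (hiff t' (h t') At' (hAB t' At')) (fun j => erefl).
case: hy' => [x' [hx' [hx'1 hx'2]]].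
have hclose : forall i, `|x' i - x0 i| < dlf.
  apply: hcl => [k|j].
    rewrite -hx'1 hy'1 hx01; apply: lt_le_trans (hdt' k) _; apply: le_trans dl1 m2b.
  rewrite -hx'2 hy'2 hht; apply: hdlh => // i; apply: lt_le_trans (hdt' i) _.
  apply: le_trans dl1 (le_trans m2a m1b).
have hfx := hdlf x' hx' hclose.
have hg' : g t' <= f x'.
  apply: (proj1 (hg t' ht')); exists x'; split => // i; by rewrite -hx'1 hy'1.
have hL' := hL t' ht' (fun i => lt_le_trans (hdt' i) dl2).
move: hfx; rewrite !ltr_distl => /andP [hf1 hf2]; apply/andP; split; lra.
Qed.

End Main.

Unset Implicit Arguments.
Unset Strict Implicit.

Theorem proposition2p9 (F : realFieldType) (S : DCLOM F) (n d : nat)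
  (s : 'I_d -> 'I_n) (phi : F -> F) (X : ('I_n -> F) -> Prop)
  (f : ('I_n -> F) -> F) :
  coord_proj s ->
  def_homeo01 S phi ->
  definable S X ->
  has_dim X d ->
  special_submanifold S s phi X ->
  (forall x, X x -> 0 < f x) ->
  def_funF S X f ->
  contF_on X f ->
  exists g : ('I_d -> F) -> F,
    [/\ forall t, projset s X t ->
          is_glb (fun y => exists x, [/\ X x, (forall i, x (s i) = t i) & y = f x]) (g t),
        forall t, projset s X t -> 0 < g t,
        def_funF S (projset s X) g &
        contF_on (projset s X) g].
Proof.
move=> _ hphi hX _ hsp hpos hf hfc.
exact: (main_res hphi hX hf hsp hpos hfc).
Qed.
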